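(* Let $S$ be a finite set and let $\mathcal{F}\subseteq 2^S$ be a non-trivial family, and let $\mathcal{I}=\{Y\subseteq S\mid \exists X\in\mathcal{F},\ Y\subseteq X\}$ be the downset of $(2^S,\subseteq)$ generated by $\mathcal{F}$. Let $\mathcal{F}'=\{2^X\mid X\in\mathcal{F}\}$ (which is also non-trivial) and let $L$ be the intersection lattice of $\mathcal{F}'$. Then $\mathrm{ncpd}(\mathcal{I})=\mathrm{nci}(L)$.
   Context: A finite family $\mathcal{F}$ of sets is non-trivial if it is non-empty and no $X\in\mathcal{F}$ satisfies $X=\bigcup\mathcal{F}$. For such $\mathcal{F}$ and non-empty $\mathcal{T}\subseteq\mathcal{F}$, let $S_{\mathcal{T}}=\bigcap\mathcal{T}$, and let $S_\emptyset=\bigcup\mathcal{F}$. The intersection lattice of $\mathcal{F}$ is $\mathbb{L}_{\mathcal{F}}=(\{S_{\mathcal{T}}\mid\mathcal{T}\subseteq\mathcal{F}\},\subseteq)$, with greatest element $\hat 1=\bigcup\mathcal{F}$. The Möbius function of a finite poset $P$ is given for $x\le y$ by $\mu_P(y,y)=1$ and $\mu_P(x,y)=-\sum_{x<z\le y}\mu_P(z,y)$; $\mathrm{nci}(L)=\{U\in L\mid U\neq\hat 1,\ \mu_L(U,\hat 1)\neq 0\}$. For a configuration $\mathcal{C}\subseteq 2^S$, the generalized Möbius function $\hat\mu_{\mathcal{C}}:2^S\to\mathbb{Z}$ is defined by top-down induction: $\hat\mu_{\mathcal{C}}(X)=[X\in\mathcal{C}]-\sum_{X\subsetneq X'\subseteq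 S}\hat\mu_{\mathcal{C}}(X')$ (with $[X\in\mathcal{C}]\in\{0,1\}$ the indicator). The non-cancelling principal downsets are $\mathrm{ncpd}(\mathcal{C})=\{2^X\mid X\subseteq S,\ \hat\mu_{\mathcal{C}}(X)\neq 0\}$, where $2^X=\{Y\subseteq S\mid Y\subseteq X\}$. *)

(* Defs.v *)
From mathcomp Require Import all_boot all_order all_algebra.
Set Implicit Arguments. Unset Strict Implicit. Unset Printing Implicit Defensive.
Import GRing.Theory Num.Theory.
Local Open Scope ring_scope.

Definition nontrivial (T : finType) (G : {set {set T}}) : bool :=
  (G != set0) && [forall X in G, X != \bigcup_(A in G) A].

(* Intersection lattice of G (as a set of elements; ordered by inclusion):
   S_Tau = \bigcap Tau for nonempty Tau \subset G, and S_emptyset = \bigcup G. *)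
Definition int_lattice (T : finType) (G : {set {set T}}) : {set {set T}} :=
  [set (if Tau == set0 then \bigcup_(A in G) A else \bigcap_(A in Tau) A)
     | Tau in powerset G].

(* The fuel #|P| is always sufficient for x, y in P (strict chains in P
   have at most #|P| elements). *)
Fixpoint mob_fuel (T : finType) (P : {set {set T}}) (y : {set T}) (n : nat)
    (x : {set T}) : int :=
  match n with
  | 0 => 0
  | n'.+1 => if x == y then 1
             else - \sum_(z in P | (x \proper z) && (z \subset y)) mob_fuel P y n' z
  end.

Definition mobius (T : finType) (P : {set {set T}}) (x y : {set T}) : int :=
  mob_fuel P y #|P| x.

Definition nci (T : finType) (L : {set {set T}}) : {set {set T}} :=
  let top := \bigcup_(U in L) U in
  [set U in L | (U != top) && (mobius L U top != 0)].

(* Generalized Moebius function of a configuration C \subseteq 2^S, top-down: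
   hmu(X) = [X in C] - sum_{X \subsetneq X'} hmu(X').
   Fuel #|S|.+1 is always sufficient. *)
Fixpoint gmob_fuel (S : finType) (C : {set {set S}}) (n : nat) (X : {set S}) : int :=
  match n with
  | 0 => 0
  | n'.+1 => (X \in C)%:Z - \sum_(X' : {set S} | X \proper X') gmob_fuel C n' X'
  end.

Definition gmob (S : finType) (C : {set {set S}}) (X : {set S}) : int :=
  gmob_fuel C #|S|.+1 X.

Definition ncpd (S : finType) (C : {set {set S}}) : {set {set {set S}}} :=
  [set powerset X | X in [set X : {set S} | gmob C X != 0]].

Definition downset (S : finType) (F : {set {set S}}) : {set {set S}} :=
  [set Y : {set S} | [exists X in F, Y \subset X]].

(* Main.v *)
Require Import Defs.
From mathcomp Require Import all_boot all_order all_algebra.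
From mathcomp Require Import zify.
Set Implicit Arguments. Unset Strict Implicit. Unset Printing Implicit Defensive.
Import GRing.Theory Num.Theory.
Local Open Scope ring_scope.

Lemma proper_compl_card (S : finType) (X X' : {set S}) :
  X \proper X' -> (#|~: X'| < #|~: X|)%N.
Proof. by move=> H; apply: proper_card; rewrite properC. Qed.

Lemma gmob_fuel_stable (S : finType) (C : {set {set S}}) n m X :
  (#|~: X| < n)%N -> (#|~: X| < m)%N -> gmob_fuel C n X = gmob_fuel C m X.
Proof.
elim: n m X => [|n IH] [|m] X //= hn hm.
congr (_ - _); apply: eq_bigr => X' hX'.
have := proper_compl_card hX'.
by move=> h; apply: IH; lia.
Qed.

Lemma gmobE (S : finType) (C : {set {set S}}) X :
  gmob C X = (X \in C)%:Z - \sum_(X' : {set S} | X \proper X') gmob C X'.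
Proof.
rewrite {1}/gmob /=; congr (_ - _); apply: eq_bigr => X' hX'.
have h1 : (#|~: X| <= #|S|)%N by apply: max_card.
have := proper_compl_card hX'.
move=> h2; apply: gmob_fuel_stable; [exact: leq_trans h2 h1 | exact: max_card].
Qed.

Definition cnt (T : finType) (P : {set {set T}}) (y x : {set T}) :=
  #|[set z in P | (x \subset z) && (z \subset y)]|.

Lemma cnt_lt (T : finType) (P : {set {set T}}) (y x z : {set T}) :
  x \in P -> x \subset y -> x \proper z -> (cnt P y z < cnt P y x)%N.
Proof.
move=> xP xy xz; apply: proper_card; rewrite properE; apply/andP; split.
  apply/subsetP => w; rewrite !inE => /andP [-> /andP [zw ->]].
  by rewrite (subset_trans (proper_sub xz) zw).
apply/subsetP => /(_ x); rewrite !inE xP subxx xy /= => /(_ isT).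
by move/andP=> [zx _]; move: xz; rewrite properE zx andbF.
Qed.

Lemma cnt_gt0 (T : finType) (P : {set {set T}}) (y x : {set T}) :
  x \in P -> x \subset y -> (0 < cnt P y x)%N.
Proof.
by move=> xP xy; rewrite /cnt card_gt0; apply/set0Pn; exists x; rewrite inE xP subxx.
Qed.

Lemma mob_fuel_stable (T : finType) (P : {set {set T}}) (y : {set T}) n m x :
  x \in P -> x \subset y -> (cnt P y x <= n)%N -> (cnt P y x <= m)%N ->
  mob_fuel P y n x = mob_fuel P y m x.
Proof.
elim: n m x => [|n IH] m x xP xy hn hm.
  by have := cnt_gt0 xP xy; lia.
case: m hm => [|m] hm; first by have := cnt_gt0 xP xy; lia.
rewrite /=; case: eqP => // _; congr (- _); apply: eq_bigr => z /andP [zP /andP [xz zy]].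
have := cnt_lt xP xy xz.
by move=> h; apply: IH => //; lia.
Qed.

Lemma mobE (T : finType) (P : {set {set T}}) (x y : {set T}) :
  x \in P -> x \subset y ->
  mobius P x y = if x == y then 1 else
     - \sum_(z in P | (x \proper z) && (z \subset y)) mobius P z y.
Proof.
move=> xP xy; rewrite /mobius.
have : (0 < #|P|)%N by rewrite card_gt0; apply/set0Pn; exists x.
have hc : (cnt P y x <= #|P|)%N.
  by apply: subset_leq_card; apply/subsetP => w; rewrite inE => /andP [].
case hP: #|P| hc => [|n] // hc _ /=.
case: eqP => // _; congr (- _); apply: eq_bigr => z /andP [zP /andP [xz zy]].
have := cnt_lt xP xy xz => h.
transitivity (mob_fuel P y n.+1 z); last by [].
by apply: mob_fuel_stable => //; lia.
Qed.

Definition Gf (S : finType) (F : {set {set S}}) := [set powerset X | X in F].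
Definition Lf (S : finType) (F : {set {set S}}) := int_lattice (Gf F).
Definition topf (S : finType) (F : {set {set S}}) := \bigcup_(U in Lf F) U.
Definition clsd (S : finType) (F : {set {set S}}) (X : {set S}) :=
  (powerset X \in Lf F) && (powerset X != topf F).
Definition cl (S : finType) (F : {set {set S}}) (X : {set S}) :=
  \bigcap_(A in F | X \subset A) A.

Lemma Lnontop (S : finType) (F : {set {set S}}) U :
  U \in Lf F -> U != \bigcup_(A in Gf F) A ->
  exists T : {set {set {set S}}}, [/\ T \subset Gf F, T != set0 & U = \bigcap_(A in T) A].
Proof.
case/imsetP => T; rewrite powersetE => sT ->.
case: ifP => [_|nT]; first by rewrite eqxx.
by move=> _; exists T; rewrite nT.
Qed.

Lemma topE (S : finType) (F : {set {set S}}) :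
  topf F = \bigcup_(A in Gf F) A.
Proof.
apply/eqP; rewrite eqEsubset; apply/andP; split.
  apply/bigcupsP => U UL.
  have [->|nt] := eqVneq U (\bigcup_(A in Gf F) A); first exact: subxx.
  have [T [sT /set0Pn [B BT] ->]] := Lnontop UL nt.
  apply: subset_trans (bigcap_inf _ BT) _.
  by apply: bigcup_sup; apply: (subsetP sT).
apply: bigcup_sup; apply/imsetP; exists set0; first by rewrite powersetE sub0set.
by rewrite eqxx.
Qed.

Lemma top_inL (S : finType) (F : {set {set S}}) : topf F \in Lf F.
Proof.
rewrite topE; apply/imsetP; exists set0; first by rewrite powersetE sub0set.
by rewrite eqxx.
Qed.

Lemma sub_top (S : finType) (F : {set {set S}}) U : U \in Lf F -> U \subset topf F.
Proof. by move=> UL; apply: bigcup_sup. Qed.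

Lemma in_top (S : finType) (F : {set {set S}}) Y :
  (Y \in topf F) = [exists X in F, Y \subset X].
Proof.
rewrite topE; apply/bigcupP/existsP => [[A /imsetP [X XF ->]]|[X /andP [XF YX]]].
  by rewrite powersetE => YX; exists X; rewrite XF.
by exists (powerset X); [apply: imset_f | rewrite powersetE].
Qed.

Lemma principal (S : finType) (F : {set {set S}}) U :
  U \in Lf F -> U != topf F -> exists Z, U = powerset Z.
Proof.
rewrite topE => UL nt; have [T [sT nT eU]] := Lnontop UL nt.
exists (\bigcap_(X in F | powerset X \in T) X).
apply/setP => Y; rewrite powersetE; apply/idP/bigcapsP.
  move=> YU X /andP [XF XT].
  by rewrite -powersetE; move: YU; rewrite eU => /bigcapP; apply.
move=> H; rewrite eU; apply/bigcapP => B BT.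
have /imsetP [X XF eB] := subsetP sT B BT.
by rewrite eB powersetE; apply: H; rewrite XF /= -eB.
Qed.

Lemma closed_in (S : finType) (F : {set {set S}}) (X : {set S}) :
  clsd F X -> [exists A in F, X \subset A].
Proof.
case/andP => XL; rewrite {1}topE => nt.
have [T [sT /set0Pn [B BT] eU]] := Lnontop XL nt.
have /imsetP [A AF eB] := subsetP sT B BT.
apply/existsP; exists A; rewrite AF /= -powersetE -eB.
have : X \in powerset X by rewrite powersetE.
by rewrite eU => /bigcapP; apply.
Qed.

Lemma sub_cl (S : finType) (F : {set {set S}}) (X : {set S}) : X \subset cl F X.
Proof. by apply/bigcapsP => A /andP []. Qed.

Lemma closed_cl (S : finType) (F : {set {set S}}) (X : {set S}) :
  nontrivial F -> [exists A in F, X \subset A] -> clsd F (cl F X).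
Proof.
move=> /andP [_ /forallP ntF] /existsP [A0 /andP [A0F XA0]].
apply/andP; split.
  apply/imsetP; exists (@powerset S @: [set A in F | X \subset A]).
    rewrite powersetE; apply/subsetP => B /imsetP [A]; rewrite inE => /andP [AF _] ->.
    exact: imset_f.
  have -> : (@powerset S @: [set A in F | X \subset A] == set0) = false.
    by apply/negbTE; rewrite imset_eq0; apply/set0Pn; exists A0; rewrite inE A0F.
  apply/setP => Y; rewrite powersetE; apply/bigcapsP/bigcapP.
    move=> H B /imsetP [A]; rewrite inE => AF ->; rewrite powersetE; exact: H.
  move=> H A AF; rewrite -powersetE; apply: H; apply: imset_f; by rewrite inE.
apply/negP => /eqP et.
have := ntF A0; rewrite A0F /= => /negP; apply.
rewrite eqEsubset; apply/andP; split; first by apply: bigcup_sup.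
apply/bigcupsP => A AF.
have : A \in topf F by rewrite in_top; apply/existsP; exists A; rewrite AF subxx.
rewrite -et powersetE => Acl; apply: subset_trans Acl _.
by apply: bigcap_inf; rewrite A0F.
Qed.

Lemma cl_min (S : finType) (F : {set {set S}}) (X X' : {set S}) :
  clsd F X' -> X \subset X' -> cl F X \subset X'.
Proof.
case/andP => XL; rewrite {1}topE => nt XX.
have [T [sT _ eU]] := Lnontop XL nt.
rewrite -powersetE eU; apply/bigcapP => B BT.
have /imsetP [A AF eB] := subsetP sT B BT.
rewrite eB powersetE; apply: bigcap_inf; rewrite AF /= -powersetE -eB.
have : X \in powerset X' by rewrite powersetE.
by rewrite eU => /bigcapP; apply.
Qed.

Definition mu (S : finType) (F : {set {set S}}) (U : {set {set S}}) :=
  mobius (Lf F) U (topf F).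

Lemma muE (S : finType) (F : {set {set S}}) U : U \in Lf F ->
  mu F U = if U == topf F then 1 else
     - \sum_(z in Lf F | (U \proper z) && (z \subset topf F)) mu F z.
Proof. by move=> UL; rewrite /mu mobE //; apply: sub_top. Qed.

Definition Sg (S : finType) (F : {set {set S}}) (X : {set S}) :=
  \sum_(X' | clsd F X' && (X \proper X')) mu F (powerset X').

Lemma powerset_inj (S : finType) : injective (@powerset S).
Proof.
move=> X Y e.
have h1 : X \in powerset Y by rewrite -e powersetE.
have h2 : Y \in powerset X by rewrite e powersetE.
by rewrite !powersetE in h1 h2; apply/eqP; rewrite eqEsubset h1 h2.
Qed.

Lemma proper_powerset (S : finType) (X Y : {set S}) :
  (powerset X \proper powerset Y) = (X \proper Y).
Proof. by rewrite !properE !powersetS. Qed.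

Lemma muP (S : finType) (F : {set {set S}}) (X : {set S}) :
  clsd F X -> mu F (powerset X) = -1 - Sg F X.
Proof.
move=> cX; have /andP [XL nt] := cX.
rewrite muE // (negbTE nt) (bigD1 (topf F)) /=; last first.
  by rewrite top_inL subxx andbT properEneq nt sub_top.
rewrite muE ?top_inL // eqxx opprD; congr (_ - _).
rewrite /Sg -(big_imset _ (in2W (@powerset_inj S))) /=.
apply: eq_bigl => z; rewrite andbC; apply/idP/imsetP.
  move=> /andP [nzt /andP [zL /andP [Xz zt]]].
  have [Z eZ] := principal zL nzt.
  exists Z; last by [].
  by rewrite unfold_in /= /clsd -eZ zL nzt -proper_powerset -eZ.
move=> [Z HZ ->]; move: HZ; rewrite unfold_in /= => /andP [/andP [ZL Zt] XZ].
rewrite Zt /=; apply/and3P; split; [exact ZL | by rewrite proper_powerset | exact: sub_top].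
Qed.

Lemma Sg_ncl (S : finType) (F : {set {set S}}) (X : {set S}) :
  nontrivial F -> [exists A in F, X \subset A] -> ~~ clsd F X -> Sg F X = -1.
Proof.
move=> ntF XI ncX.
have ccl := closed_cl ntF XI.
rewrite /Sg (eq_bigl (fun X' => clsd F X' && (cl F X \subset X'))); last first.
  move=> X'; case cX': (clsd F X') => //=; apply/idP/idP => [XX'|clX'].
    exact: cl_min cX' (proper_sub XX').
  rewrite properEneq (subset_trans (sub_cl F X) clX') andbT.
  by apply/eqP => e; move: ncX; rewrite e cX'.
rewrite (bigD1 (cl F X)) /=; last by rewrite ccl subxx.
rewrite (eq_bigl (fun X' => clsd F X' && (cl F X \proper X'))); last first.
  move=> X'; rewrite properEneq eq_sym; case: (clsd F X') => //=.
  by rewrite andbC.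
by rewrite -/(Sg F (cl F X)) (muP ccl) subrK.
Qed.

Lemma gmob_char (S : finType) (F : {set {set S}}) (X : {set S}) :
  nontrivial F ->
  gmob (downset F) X = if clsd F X then - mu F (powerset X) else 0.
Proof.
move=> ntF.
suff H : forall k (X : {set S}), (#|~: X| < k)%N ->
  gmob (downset F) X = if clsd F X then - mu F (powerset X) else 0.
  exact: (H _ X (ltnSn _)).
elim=> [//|k IH] {}X hk.
rewrite gmobE (eq_bigr (fun X' => if clsd F X' then - mu F (powerset X') else 0)); last first.
  move=> X' XX'; apply: IH.
  have := proper_compl_card XX'; move=> h; exact: leq_trans h hk.
rewrite -big_mkcondr /= sumrN opprK.
rewrite (eq_bigl (fun X' => clsd F X' && (X \proper X'))); last by move=> X'; rewrite andbC.
rewrite -/(Sg F X) inE.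
case XI: [exists A in F, X \subset A].
  case cX: (clsd F X); first by rewrite (muP cX); lia.
  by rewrite (Sg_ncl ntF XI) ?cX.
have -> : clsd F X = false by apply/negbTE/negP => /closed_in; rewrite XI.
rewrite /Sg big1 // => X' /andP [cX' XX'].
have /existsP [A /andP [AF X'A]] := closed_in cX'.
move/negbT: XI => /negP; case; apply/existsP; exists A.
by rewrite AF (subset_trans (proper_sub XX') X'A).
Qed.

Theorem lemma5p5 (S : finType) (F : {set {set S}}) :
  nontrivial F ->
  ncpd (downset F) = nci (int_lattice [set powerset X | X in F]).
Proof.
move=> ntF; rewrite /nci -/(Gf F) -/(Lf F) -/(topf F).
apply/setP => U; rewrite inE /ncpd; apply/imsetP/andP.
  move=> [X]; rewrite inE gmob_char // => H ->.
  move: H; case cX: (clsd F X); last by rewrite eqxx.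
  rewrite oppr_eq0 => nz; case/andP: cX => XL Xt.
  by split => //; rewrite Xt.
move=> [UL /andP [Ut nz]].
have [Z eZ] := principal UL Ut.
exists Z => //; rewrite inE gmob_char //.
have -> : clsd F Z by rewrite /clsd -eZ UL Ut.
by rewrite oppr_eq0 -eZ.
Qed.
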